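(* Let $\mu\in\mathbb{R}\setminus\{0\}$ and let $g$ be the skew-symmetric-Laplace-uniform density with parameter $\mu$ (defined in the context). Then the mode $M_0$ of $g$ (the point at which $g$ attains its maximum) is $$M_0=\begin{cases}\mu & \text{if } 0<|\mu|<\tfrac12,\\ \operatorname{sign}(\mu)-\mu & \text{if } \tfrac12\le|\mu|<1,\\ 0 & \text{if } |\mu|\ge 1.\end{cases}$$
   Context: For $\mu\in\mathbb{R}\setminus\{0\}$, the skew-symmetric-Laplace-uniform distribution $SSLUD(\mu)$ is the distribution on $\mathbb{R}$ with density $$g(x)=\begin{cases} 0 & \text{if } x/\mu<-1,\\ e^{-|x|}\left(\dfrac{x}{2\mu}+\dfrac12\right) & \text{if } -1\le x/\mu<1,\\ e^{-|x|} & \text{if } x/\mu\ge 1.\end{cases}$$ *)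

(* Defs.v *)
From Stdlib Require Import Reals Lra.
Open Scope R_scope.

Definition sslud_density (mu x : R) : R :=
  if Rlt_dec (x / mu) (-1) then 0
  else if Rlt_dec (x / mu) 1 then exp (- Rabs x) * (x / (2 * mu) + 1 / 2)
  else exp (- Rabs x).

Definition sign (x : R) : R :=
  if Rlt_dec 0 x then 1 else if Rlt_dec x 0 then -1 else 0.

Definition is_mode (f : R -> R) (m : R) : Prop := forall x, f x <= f m.

Definition is_unique_mode (f : R -> R) (m : R) : Prop :=
  is_mode f m /\ forall y, is_mode f y -> y = m.

(* Main.v *)
Require Import Defs.
From Stdlib Require Import Reals.
From Stdlib Require Import Lra Psatz.
Open Scope R_scope.

Lemma div_lt a b c : 0 < c -> a < b * c -> a / c < b.
Proof. intros. apply Rmult_lt_reg_r with c; auto. replace (a / c * c) with a by (field; lra); lra. Qed.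

Lemma d1 mu x : 0 < mu -> x < -mu -> sslud_density mu x = 0.
Proof.
  intros Hm Hx. unfold sslud_density.
  assert (E : x = (x/mu)*mu) by (field; lra).
  destruct (Rlt_dec (x/mu) (-1)) as [h|h]; auto.
  exfalso. apply h. set (y := x/mu) in *. nra.
Qed.

Lemma d2 mu x : 0 < mu -> -mu <= x < mu ->
  sslud_density mu x = exp (- Rabs x) * ((x + mu) / (2 * mu)).
Proof.
  intros Hm Hx. unfold sslud_density.
  assert (E : x = (x/mu)*mu) by (field; lra).
  destruct (Rlt_dec (x/mu) (-1)) as [h|h].
  { exfalso. set (y := x/mu) in *. nra. }
  destruct (Rlt_dec (x/mu) 1) as [h2|h2].
  { f_equal. field. lra. }
  exfalso. apply h2. set (y := x/mu) in *. nra.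
Qed.

Lemma d3 mu x : 0 < mu -> mu <= x -> sslud_density mu x = exp (- x).
Proof.
  intros Hm Hx. unfold sslud_density.
  assert (E : x = (x/mu)*mu) by (field; lra).
  rewrite Rabs_right by lra.
  destruct (Rlt_dec (x/mu) (-1)) as [h|h].
  { exfalso. set (y := x/mu) in *. nra. }
  destruct (Rlt_dec (x/mu) 1) as [h2|h2]; auto.
  exfalso. set (y := x/mu) in *. nra.
Qed.

Lemma neg_half mu x : 0 < mu -> -mu <= x < 0 -> sslud_density mu x < 1/2.
Proof.
  intros Hm Hx. rewrite d2 by lra. rewrite Rabs_left by lra.
  replace (- - x) with x by ring.
  assert (exp x < 1) by (rewrite <- exp_0; apply exp_increasing; lra).
  assert (0 <= (x + mu) / (2 * mu)) by (unfold Rdiv; apply Rmult_le_pos; [lra| left; apply Rinv_0_lt_compat; lra]).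
  assert ((x + mu) / (2 * mu) < 1/2) by (apply div_lt; lra).
  pose proof (exp_pos x). nra.
Qed.

Lemma f0 mu : 0 < mu -> sslud_density mu 0 = 1/2.
Proof. intros. rewrite d2 by lra. rewrite Rabs_R0, Ropp_0, exp_0. field. lra. Qed.

Definition smax (f : R -> R) m := forall x, x <> m -> f x < f m.

Lemma smax_unique f m : smax f m -> is_unique_mode f m.
Proof.
  intros H. split.
  - intros x. destruct (Req_dec x m) as [->|n]; [lra|]. left; auto.
  - intros y Hy. destruct (Req_dec y m) as [|n]; auto.
    specialize (H y n). specialize (Hy m). lra.
Qed.

Lemma caseA mu : 0 < mu < 1/2 -> smax (sslud_density mu) mu.
Proof.
  intros Hm x Hx. rewrite (d3 mu mu) by lra.
  assert (Mid : forall x, 0 <= x < mu -> sslud_density mu x < exp (- mu)).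
  { intros z Hz. rewrite d2 by lra. rewrite Rabs_right by lra.
    replace (- mu) with (- z + (z - mu)) by ring. rewrite exp_plus.
    pose proof (exp_ineq1_le (z - mu)). pose proof (exp_pos (- z)).
    assert ((z + mu) / (2 * mu) < 1 + (z - mu)) by (apply div_lt; nra).
    apply Rmult_lt_compat_l; lra. }
  assert (H0 : 1/2 < exp (- mu)) by (rewrite <- (f0 mu) by lra; apply Mid; lra).
  destruct (Rlt_dec x (-mu)).
  { rewrite d1 by lra. apply exp_pos. }
  destruct (Rlt_dec x 0).
  { pose proof (neg_half mu x). lra. }
  destruct (Rlt_dec x mu). { apply Mid; lra. }
  rewrite d3 by lra. apply exp_increasing. lra.
Qed.

Lemma caseB mu : 1/2 <= mu < 1 -> smax (sslud_density mu) (1 - mu).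
Proof.
  intros Hm x Hx.
  set (F := exp (mu - 1) / (2 * mu)).
  assert (HF : sslud_density mu (1 - mu) = F).
  { unfold F. destruct (Req_dec mu (1/2)) as [e|e].
    - rewrite d3 by lra. rewrite e. field_simplify. f_equal. lra.
    - rewrite d2 by lra. rewrite Rabs_right by lra.
      replace (- (1 - mu)) with (mu - 1) by ring. field_simplify; lra. }
  rewrite HF.
  assert (Mid : forall z, 0 <= z < mu -> z <> 1 - mu -> sslud_density mu z < F).
  { intros z Hz Hz'. rewrite d2 by lra. rewrite Rabs_right by lra. unfold F.
    replace (mu - 1) with (- z + (z + mu - 1)) by ring. rewrite exp_plus.
    assert (1 + (z + mu - 1) < exp (z + mu - 1)) by (apply exp_ineq1; lra).
    pose proof (exp_pos (- z)).
    unfold Rdiv. rewrite Rmult_assoc. apply Rmult_lt_compat_l; auto.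
    apply Rmult_lt_compat_r. apply Rinv_0_lt_compat; lra. lra. }
  assert (H0 : 1/2 < F) by (rewrite <- (f0 mu) by lra; apply Mid; lra).
  destruct (Rlt_dec x (-mu)).
  { rewrite d1 by lra. unfold F. apply Rdiv_lt_0_compat. apply exp_pos. lra. }
  destruct (Rlt_dec x 0).
  { pose proof (neg_half mu x). lra. }
  destruct (Rlt_dec x mu). { apply Mid; lra. }
  rewrite d3 by lra.
  assert (A : exp (- x) <= exp (- mu)).
  { destruct (Req_dec x mu) as [->|]; [lra|]. left; apply exp_increasing; lra. }
  assert (B : exp (- mu) <= F).
  { unfold F. apply Rmult_le_reg_r with (2*mu); [lra|].
    replace (exp (mu - 1) / (2 * mu) * (2 * mu)) with (exp (mu - 1)) by (field; lra).
    replace (mu - 1) with (- mu + (2 * mu - 1)) by ring. rewrite exp_plus.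
    pose proof (exp_ineq1_le (2*mu - 1)). pose proof (exp_pos (- mu)). nra. }
  destruct (Req_dec x mu) as [e|e].
  - assert (mu <> 1/2) by (intro; apply Hx; lra).
    assert (exp (- mu) < F).
    { unfold F. apply Rmult_lt_reg_r with (2*mu); [lra|].
      replace (exp (mu - 1) / (2 * mu) * (2 * mu)) with (exp (mu - 1)) by (field; lra).
      replace (mu - 1) with (- mu + (2 * mu - 1)) by ring. rewrite exp_plus.
      assert (1 + (2*mu - 1) < exp (2*mu - 1)) by (apply exp_ineq1; lra).
      pose proof (exp_pos (- mu)). nra. }
    lra.
  - assert (exp (- x) < exp (- mu)) by (apply exp_increasing; lra). lra.
Qed.

Lemma caseC mu : 1 <= mu -> smax (sslud_density mu) 0.
Proof.
  intros Hm x Hx. rewrite f0 by lra.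
  destruct (Rlt_dec x (-mu)). { rewrite d1 by lra. lra. }
  destruct (Rlt_dec x 0). { apply neg_half; lra. }
  destruct (Rlt_dec x mu).
  { rewrite d2 by lra. rewrite Rabs_right by lra.
    assert (1 + x < exp x) by (apply exp_ineq1; lra).
    assert (exp (-x) * exp x = 1) by (rewrite <- exp_plus; replace (-x + x) with 0 by ring; apply exp_0).
    pose proof (exp_pos (-x)).
    assert ((x + mu) / (2 * mu) < exp x / 2) by (apply div_lt; nra).
    nra. }
  rewrite d3 by lra.
  assert (exp (-x) <= exp (-1)).
  { destruct (Req_dec x 1) as [e|e]. right; f_equal; lra. left; apply exp_increasing; lra. }
  assert (1 + 1 < exp 1) by (apply exp_ineq1; lra).
  assert (exp (-1) * exp 1 = 1) by (rewrite <- exp_plus; replace (-1 + 1) with 0 by ring; apply exp_0).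
  pose proof (exp_pos (-1)). nra.
Qed.

Lemma sym mu x : mu <> 0 -> sslud_density mu x = sslud_density (- mu) (- x).
Proof.
  intros H. unfold sslud_density.
  replace (- x / - mu) with (x / mu) by (field; auto).
  replace (- x / (2 * - mu)) with (x / (2 * mu)) by (field; auto).
  rewrite Rabs_Ropp. reflexivity.
Qed.

Lemma smax_neg mu m : mu <> 0 -> smax (sslud_density (- mu)) (- m) -> smax (sslud_density mu) m.
Proof.
  intros H S x Hx. rewrite (sym mu x H), (sym mu m H). apply S. lra.
Qed.

Theorem mainTheorem4 (mu : R) (hmu : mu <> 0) :
  (0 < Rabs mu < 1 / 2 -> is_unique_mode (sslud_density mu) mu) /\
  (1 / 2 <= Rabs mu < 1 -> is_unique_mode (sslud_density mu) (sign mu - mu)) /\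
  (1 <= Rabs mu -> is_unique_mode (sslud_density mu) 0).
Proof.
  destruct (Rlt_dec 0 mu) as [p|p].
  - rewrite Rabs_right by lra. unfold sign.
    destruct (Rlt_dec 0 mu); [|lra].
    split; [|split]; intros; apply smax_unique.
    + apply caseA; lra.
    + apply caseB; lra.
    + apply caseC; lra.
  - assert (n : mu < 0) by lra.
    rewrite Rabs_left by lra. unfold sign.
    destruct (Rlt_dec 0 mu); [lra|]. destruct (Rlt_dec mu 0); [|lra].
    split; [|split]; intros; apply smax_unique; apply smax_neg; auto.
    + replace (- mu) with (- mu) by ring. apply caseA; lra.
    + replace (- (-1 - mu)) with (1 - - mu) by ring. apply caseB; lra.
    + replace (- 0) with 0 by ring. apply caseC; lra.
Qed.
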